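(* Let $\langle \mathcal{M},\mathcal{R}\rangle$ be a finite reaction network and let $X\subseteq\mathcal{M}$ be a nonempty reactive closed set such that the reactive closed sets contained in $X$ are totally ordered by inclusion, i.e., for any two distinct reactive closed sets $X_1\neq X_2$ with $X_1,X_2\subseteq X$, either $X_1\subset X_2$ or $X_2\subset X_1$. Then there exists a reaction $r\in\mathcal{R}_X$ such that $X=G_{CL}(\mathrm{supp}(r))$.
   Context: A reaction network is a pair $\langle \mathcal{M},\mathcal{R}\rangle$ where $\mathcal{M}$ is a finite set of species and $\mathcal{R}$ is a finite set of reactions, each of the form $\sum_j a_{ij}s_j\to\sum_j b_{ij}s_j$ with $a_{ij},b_{ij}\ge 0$. For a reaction $r$, $\mathrm{supp}(r)=\{s_j: a_{ij}>0\}$ and $\mathrm{prod}(r)=\{s_j: b_{ij}>0\}$; for a set of reactions these denote unions over its reactions. Reactions with empty support (inflows $\emptyset\to s$) are allowed. For $X\subseteq\mathcal{M}$, $\mathcal{R}_X=\{r\in\mathcal{R}:\mathrm{supp}(r)\subseteq X\}$. $X$ is closed if $\mathrm{prod}(\mathcal{R}_X)\subseteq X$. $G_{CL}(Y)$ denotes the smallest closed set containing $Y$. $X$ is reactive if for every $x\in X$ there is $r\in\mathcal{R}_X$ with $x\in\mathrm{supp}(r)\cup\mathrm{prod}(r)$. *)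

(* Defs.v *)
From mathcomp Require Import all_boot.
Unset Implicit Arguments. Unset Printing Implicit Defensive.

(* A finite reaction network: species type M, reaction type R (both finite),
   reactant coefficients a r s and product coefficients b r s (naturals). *)
Section RN.
Variables (M R : finType) (a b : R -> M -> nat).

Definition supp (r : R) : {set M} := [set s | 0 < a r s].
Definition prodR (r : R) : {set M} := [set s | 0 < b r s].

Definition RX (X : {set M}) : {set R} := [set r | supp r \subset X].

Definition rn_closed (X : {set M}) : bool :=
  [forall r, (r \in RX X) ==> (prodR r \subset X)].

Definition GCL (Y : {set M}) : {set M} :=
  \bigcap_(Z : {set M} | rn_closed Z && (Y \subset Z)) Z.

Definition reactive (X : {set M}) : bool :=
  [forall x in X, exists r in RX X, x \in supp r :|: prodR r].
End RN.

(* Main.v *)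
Require Import Defs.
From mathcomp Require Import all_boot.
Set Implicit Arguments.

Section L.
Variables (M R : finType) (a b : R -> M -> nat).

Lemma GCL_min (Y Z : {set M}) : rn_closed M R a b Z -> Y \subset Z -> GCL M R a b Y \subset Z.
Proof. by move=> cZ YZ; apply: bigcap_inf; rewrite cZ YZ. Qed.

Lemma GCL_sup (Y : {set M}) : Y \subset GCL M R a b Y.
Proof. by apply/bigcapsP => Z /andP[_]. Qed.

Lemma RX_mono (X Y : {set M}) : X \subset Y -> RX M R a X \subset RX M R a Y.
Proof. move=> XY; apply/subsetP => r; rewrite !inE => h; exact: subset_trans h XY. Qed.

Lemma GCL_closed (Y : {set M}) : rn_closed M R a b (GCL M R a b Y).
Proof.
apply/forallP => r; apply/implyP; rewrite inE => sr.
apply/bigcapsP => Z /andP[cZ YZ].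
have : supp M R a r \subset Z by apply: subset_trans sr (GCL_min cZ YZ).
move=> sZ; move/forallP: cZ => /(_ r) /implyP; apply; by rewrite inE.
Qed.

Lemma GCL_split (Y : {set M}) x : x \in GCL M R a b Y ->
  x \in Y \/ exists2 r, r \in RX M R a (GCL M R a b Y) & x \in prodR M R b r.
Proof.
set C := GCL M R a b Y.
set C' := Y :|: \bigcup_(r in RX M R a C) prodR M R b r.
have C'C : C' \subset C.
  apply/subUsetP; split; first exact: GCL_sup.
  apply/bigcupsP => r rin.
  by move/forallP: (GCL_closed Y) => /(_ r) /implyP; apply.
have cC' : rn_closed M R a b C'.
  apply/forallP => r; apply/implyP => rin.
  have rC : r \in RX M R a C by apply: (subsetP (RX_mono C'C)).
  apply/subsetP => y yp; rewrite inE; apply/orP; right.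
  by apply/bigcupP; exists r.
have CC' : C \subset C' by apply: GCL_min => //; exact: subsetUl.
move=> /(subsetP CC'); rewrite inE => /orP[-> | /bigcupP[r rin xp]]; first by left.
by right; exists r.
Qed.

Lemma GCL_reactive r : reactive M R a b (GCL M R a b (supp M R a r)).
Proof.
have rin : r \in RX M R a (GCL M R a b (supp M R a r)) by rewrite inE GCL_sup.
apply/forall_inP => x /GCL_split [xs | [r' r'in xp]]; apply/exists_inP.
  by exists r => //; rewrite inE xs.
by exists r' => //; rewrite inE xp orbT.
Qed.

End L.

Theorem lemma2 (M R : finType) (a b : R -> M -> nat) (X : {set M}) :
  X != set0 -> reactive M R a b X -> rn_closed M R a b X ->
  (forall X1 X2 : {set M},
      reactive M R a b X1 -> rn_closed M R a b X1 -> X1 \subset X ->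
      reactive M R a b X2 -> rn_closed M R a b X2 -> X2 \subset X ->
      X1 != X2 -> X1 \proper X2 \/ X2 \proper X1) ->
  exists2 r, r \in RX M R a X & X = GCL M R a b (supp M R a r).
Proof.
move=> /set0Pn[x0 x0X] reX cX tot.
have [r0 r0in _] : exists2 r, r \in RX M R a X & x0 \in supp M R a r :|: prodR M R b r.
  by move/forall_inP: reX => /(_ x0 x0X) /exists_inP[r ? ?]; exists r.
set G := fun r => GCL M R a b (supp M R a r).
have GX r : r \in RX M R a X -> G r \subset X.
  by rewrite inE => sr; apply: GCL_min.
pose rm := [arg max_(r > r0 in RX M R a X) #|G r|].
have [rmin rmax] : rm \in RX M R a X /\ forall r, r \in RX M R a X -> #|G r| <= #|G rm|.
  by rewrite /rm; case: arg_maxnP => // r rin H; split.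
have sub r : r \in RX M R a X -> G r \subset G rm.
  move=> rin; have [->|ne] := eqVneq (G r) (G rm); first by [].
  case: (tot _ _ (@GCL_reactive _ _ _ _ _) (@GCL_closed _ _ _ _ _) (GX _ rin)
     (@GCL_reactive _ _ _ _ _) (@GCL_closed _ _ _ _ _) (GX _ rmin) ne) => [/andP[] //|pr].
  by have := proper_card pr; rewrite ltnNge rmax.
exists rm => //; apply/eqP; rewrite eqEsubset GX // andbT.
apply/subsetP => x xX.
move/forall_inP: reX => /(_ x xX) /exists_inP[r rin].
rewrite inE => /orP[xs | xp]; apply: (subsetP (sub r rin)).
  exact: (subsetP (@GCL_sup _ _ _ _ _)).
have rG : r \in RX M R a (G r) by rewrite inE GCL_sup.
by move/forallP: (@GCL_closed M R a b (supp M R a r)) => /(_ r) /implyP /(_ rG) /subsetP; apply.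
Qed.
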